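(* Let $p$ be an odd prime and $n\ge1$. Let $g_0,\ldots,g_{p-1}$ be quadratic near-bent functions from $\mathbb{F}_{p^n}$ to $\mathbb{F}_p$ whose corresponding linearized polynomials $L_0,\ldots,L_{p-1}$ all have the same kernel $\{c\beta: c\in\mathbb{F}_p\}$ in $\mathbb{F}_{p^n}$, for some $\beta\in\mathbb{F}_{p^n}^*$. Let $b_0,\ldots,b_{p-1}\in\mathbb{F}_{p^n}$ satisfy $g_k(\beta)+\mathrm{Tr}_n(b_k\beta)=g_0(\beta)+k$ for $0\le k\le p-1$. Then the near-bent functions $f_k(x)=g_k(x)+\mathrm{Tr}_n(b_kx)$, $0\le k\le p-1$, satisfy $\mathrm{supp}(\widehat{f_i})\cap\mathrm{supp}(\widehat{f_j})=\emptyset$ for $0\le i\ne j\le p-1$.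
   Context: $\epsilon_p=e^{2\pi i/p}$, $\mathrm{Tr}_n$ the absolute trace, $\widehat{f}(b)=\sum_{x\in\mathbb{F}_{p^n}}\epsilon_p^{f(x)-\mathrm{Tr}_n(bx)}$, $\mathrm{supp}(\widehat f)=\{b:\widehat f(b)\ne0\}$. Near-bent: $|\widehat{f}(b)|^2\in\{0,p^{n+1}\}$ for all $b$. A quadratic function is $g(x)=\mathrm{Tr}_n\big(\sum_{i=0}^l a_ix^{p^i+1}\big)$ with $a_i\in\mathbb{F}_{p^n}$; its corresponding linearized polynomial is $L(z)=\sum_{i=0}^l\big(a_i^{p^l}z^{p^{l+i}}+a_i^{p^{l-i}}z^{p^{l-i}}\big)$, regarded as an $\mathbb{F}_p$-linear map on $\mathbb{F}_{p^n}$. *)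

(* Defs.v *)
From HB Require Import structures.
From mathcomp Require Import all_boot all_order all_algebra all_field.
Set Implicit Arguments. Unset Strict Implicit. Unset Printing Implicit Defensive.
Import Order.TTheory GRing.Theory Num.Theory.
Local Open Scope ring_scope.

(* eps_p = e^(2 pi i/p) = (p.-root (-1))^2, since p.-root(-1) (minimal
   nonnegative argument) is e^(i pi/p) *)
Definition eps (p : nat) : algC := (p.-root (-1 : algC)) ^+ 2.

Section Defs.
Variable F : finFieldType.

Definition trn (p n : nat) (x : F) : F := \sum_(i < n) x ^+ (p ^ i).

Definition quadf (p n l : nat) (a : nat -> F) (x : F) : F :=
  trn p n (\sum_(i < l.+1) a i * x ^+ (p ^ i + 1)).

Definition linpol (p l : nat) (a : nat -> F) (z : F) : F :=
  \sum_(i < l.+1) (a i ^+ (p ^ l) * z ^+ (p ^ (l + i))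
                   + a i ^+ (p ^ (l - i)) * z ^+ (p ^ (l - i))).

(* epsilon_p^t for t in the prime subfield {k%:R : k < p} of F *)
Definition epsF (p : nat) (t : F) : algC :=
  if [pick k : 'I_p | (k%:R : F) == t] is Some k
  then eps p ^+ k else 0.

Definition walsh (p n : nat) (f : F -> F) (b : F) : algC :=
  \sum_(x : F) epsF p (f x - trn p n (b * x)).

Definition near_bent (p n : nat) (f : F -> F) : Prop :=
  forall b : F, `|walsh p n f b| ^+ 2 = 0 \/ `|walsh p n f b| ^+ 2 = (p ^ n.+1)%:R.

Definition wsupp (p n : nat) (f : F -> F) : {set F} :=
  [set b | walsh p n f b != 0].
End Defs.

(* Main.v *)
Require Import Defs.
From HB Require Import structures.
From mathcomp Require Import all_boot all_order all_algebra all_field.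
Import Order.TTheory GRing.Theory Num.Theory.
Local Open Scope ring_scope.

Section Eps.
Variable p : nat.
Hypotheses (hp : prime p) (hodd : odd p).
Let p_gt0 : (0 < p)%N := prime_gt0 hp.

Lemma rootp : (p.-root (-1 : algC)) ^+ p = -1.
Proof. exact: rootCK. Qed.

Lemma eps_p : eps p ^+ p = 1.
Proof. by rewrite /eps exprAC rootp sqrrN expr1n. Qed.

Lemma eps_ne1 : eps p != 1.
Proof.
rewrite /eps sqrf_eq1; apply/negP => /orP [/eqP h|/eqP h].
  have := rootp; rewrite h expr1n => /eqP; rewrite eq_sym.
  by rewrite lt_eqF // (lt_trans (ltrN10 _) ltr01).
by have := rootC_lt0 (-1 : algC) (prime_gt1 hp); rewrite h ltrN10.
Qed.

Lemma eps_dvd k : eps p ^+ k = 1 -> (p %| k)%N.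
Proof.
move=> hk; have [m pm mp] := prim_order_exists p_gt0 eps_p.
case/orP: ((primeP hp).2 m mp) => /eqP em; subst m.
  by have := prim_expr_order pm; rewrite expr1 => e; have := eps_ne1; rewrite e eqxx.
by rewrite (prim_order_dvd pm) hk.
Qed.
End Eps.

Section Aux.
Variables (F : finFieldType) (p n : nat).
Hypotheses (hchar : p \in [pchar F]) (hcard : #|F| = (p ^ n)%N) (hn : (0 < n)%N).

Let hp : prime p := pcharf_prime hchar.
Let p_gt0 : (0 < p)%N := prime_gt0 hp.

Lemma frobD (x y : F) : (x + y) ^+ p = x ^+ p + y ^+ p.
Proof. exact: (pFrobenius_autD_comm hchar (mulrC x y)). Qed.

Lemma frobXD i (x y : F) : (x + y) ^+ (p ^ i) = x ^+ (p ^ i) + y ^+ (p ^ i).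
Proof.
elim: i => [|i IH]; first by rewrite expn0 !expr1.
by rewrite expnSr !exprM IH frobD.
Qed.

Lemma frobX0 i : (0 : F) ^+ (p ^ i) = 0.
Proof. by rewrite expr0n expn_eq0 eqn0Ngt p_gt0. Qed.

Lemma trnD (x y : F) : trn p n (x + y) = trn p n x + trn p n y.
Proof. rewrite /trn -big_split /=; apply: eq_bigr => i _; exact: frobXD. Qed.

Lemma trn0 : trn p n (0 : F) = 0.
Proof. by rewrite /trn big1 // => i _; rewrite frobX0. Qed.

Lemma trnN (x : F) : trn p n (- x) = - trn p n x.
Proof. by apply: (addrI (trn p n x)); rewrite -trnD !subrr trn0. Qed.

Lemma trnB (x y : F) : trn p n (x - y) = trn p n x - trn p n y.
Proof. by rewrite trnD trnN. Qed.

Lemma trn_sum (I : Type) (r : seq I) (P : pred I) (G : I -> F) :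
  trn p n (\sum_(j <- r | P j) G j) = \sum_(j <- r | P j) trn p n (G j).
Proof. exact: (big_morph _ trnD trn0). Qed.

Lemma trn_frob (x : F) : trn p n (x ^+ p) = trn p n x.
Proof.
rewrite /trn; case: n hn hcard => [//|m] _ hc.
rewrite big_ord_recr big_ord_recl /= expn0 expr1 -exprM -expnS -hc expf_card.
rewrite addrC; congr (_ + _); apply: eq_bigr => i _.
by rewrite -exprM -expnS.
Qed.

Lemma trn_frobX j (x : F) : trn p n (x ^+ (p ^ j)) = trn p n x.
Proof.
elim: j => [|j IH]; first by rewrite expn0 expr1.
by rewrite expnSr exprM trn_frob IH.
Qed.

Lemma trn_fixed (x : F) : (trn p n x) ^+ p = trn p n x.
Proof.
rewrite -{2}(trn_frob x) /trn -[p in _ ^+ p]expn1 (big_morph _ (frobXD 1) (frobX0 1)).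
by apply: eq_bigr => i _; rewrite expn1 -!exprM mulnC.
Qed.

Lemma natr_inj_lt k k' : (k < p)%N -> (k' < p)%N -> (k%:R : F) = k'%:R -> k = k'.
Proof.
wlog le : k k' / (k <= k')%N => [W hk hk' e|hk hk' e].
  case: (leqP k k') => h; first exact: W.
  by symmetry; apply: W => //; apply: ltnW.
have : (p %| k' - k)%N by rewrite (dvdn_pcharf hchar) natrB // e subrr.
case: (posnP (k' - k)) => [h0 _|hpos hd].
  by apply/eqP; rewrite eqn_leq le /= -subn_eq0 h0.
have := dvdn_leq hpos hd; rewrite leqNgt => /negP; case.
by apply: leq_ltn_trans (leq_subr _ _) hk'.
Qed.

Lemma fixed_nat (y : F) : y ^+ p = y -> exists m, y = m%:R.
Proof.
move=> hy; case: (boolP (y \in [seq (k%:R : F) | k <- iota 0 p])).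
  by case/mapP=> k _ ->; exists k.
move=> hnot; exfalso.
pose P : {poly F} := 'X^p - 'X.
have sP : size P = p.+1.
  rewrite /P size_polyDl size_polyXn // size_polyN size_polyX.
  by rewrite ltnS prime_gt1.
have P0 : P != 0 by rewrite -size_poly_eq0 sP.
set rs := y :: [seq (k%:R : F) | k <- iota 0 p].
have r1 : all (root P) rs.
  rewrite /= /root /P !hornerE hy subrr eqxx /=.
  apply/allP => z /mapP [k _ ->]; rewrite /root !hornerE.
  by rewrite -natrX -(GRing.natr_mod_pchar hchar (k ^ p)) fermat_little // (GRing.natr_mod_pchar hchar) subrr.
have r2 : uniq rs.
  rewrite /= hnot map_inj_in_uniq ?iota_uniq // => k k'.
  rewrite !mem_iota /= !add0n; exact: natr_inj_lt.
have := max_poly_roots P0 r1 r2.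
by rewrite sP /= size_map size_iota ltnn.
Qed.

Lemma trn_nat (x : F) : exists m, trn p n x = m%:R.
Proof. exact: fixed_nat (trn_fixed x). Qed.


Lemma expr_pp (x : F) i j : (x ^+ (p ^ i)) ^+ (p ^ j) = x ^+ (p ^ (i + j)).
Proof. by rewrite -exprM -expnD. Qed.

Lemma quadf_shift l (a : nat -> F) beta :
  linpol p l a beta = 0 -> forall x, quadf p n l a (x + beta) = quadf p n l a x + quadf p n l a beta.
Proof.
move=> hL x.
have e : forall i, a i * (x + beta) ^+ (p ^ i + 1) =
   a i * x ^+ (p ^ i + 1) + a i * beta ^+ (p ^ i + 1) +
   (a i * (x ^+ (p ^ i) * beta) + a i * (beta ^+ (p ^ i) * x)).
  move=> i; rewrite !exprD !expr1 frobXD !mulrDl !mulrDr.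
  rewrite -!addrA; congr (_ + _).
  by rewrite addrA addrC.
have E : \sum_(i < l.+1) a i * (x + beta) ^+ (p ^ i + 1) = \sum_(i < l.+1)
   (a i * x ^+ (p ^ i + 1) + a i * beta ^+ (p ^ i + 1) +
   (a i * (x ^+ (p ^ i) * beta) + a i * (beta ^+ (p ^ i) * x))).
  by apply: eq_bigr => i _; exact: e.
rewrite /quadf E.
rewrite !big_split /= !trnD.
rewrite -[RHS]addr0; congr (_ + _).
transitivity (trn p n (x ^+ (p ^ l) * linpol p l a beta)); last by rewrite hL mulr0 trn0.
rewrite /linpol mulr_sumr !trn_sum -big_split /=; apply: eq_bigr => i _.
rewrite mulrDr trnD [RHS]addrC; congr (_ + _).
  rewrite -(trn_frobX (l - i) (a i * (x ^+ (p ^ i) * beta))); congr trn.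
  have il : (i <= l)%N by rewrite -ltnS; exact: ltn_ord i.
  by rewrite !exprMn expr_pp subnKC // mulrCA.
rewrite -(trn_frobX l (a i * (beta ^+ (p ^ i) * x))); congr trn.
by rewrite !exprMn expr_pp addnC [RHS]mulrC -mulrA.
Qed.

Lemma epsF_nat m : epsF p (m%:R : F) = eps p ^+ m.
Proof.
rewrite /epsF; case: pickP => [k /eqP hk | h].
  rewrite -(GRing.natr_mod_pchar hchar m) in hk.
  rewrite (natr_inj_lt _ _ (ltn_ord k) (ltn_pmod m p_gt0) hk).
  exact: expr_mod _ (eps_p _ hp).
have := h (Ordinal (ltn_pmod m p_gt0)); rewrite /= (GRing.natr_mod_pchar hchar) eqxx.
by [].
Qed.

Lemma walsh_shift l (a : nat -> F) bb beta lam :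
  linpol p l a beta = 0 ->
  walsh p n (fun x => quadf p n l a x + trn p n (bb * x)) lam != 0 ->
  quadf p n l a beta + trn p n (bb * beta) - trn p n (lam * beta) = 0.
Proof.
move=> hL hW.
set h := fun x => quadf p n l a x + trn p n (bb * x) - trn p n (lam * x).
have hT : forall x, exists m, h x = m%:R.
  move=> x; rewrite /h /quadf -!trnD -trnN -trnD; exact: trn_nat.
have hs : forall x, h (x + beta) = h x + h beta.
  move=> x; rewrite /h quadf_shift // !mulrDr !trnD opprD.
  by rewrite [X in X + _]addrACA [LHS]addrACA.
have hE : forall x, epsF p (h (x + beta)) = epsF p (h x) * epsF p (h beta).
  move=> x; rewrite hs; case: (hT x) => m ->; case: (hT beta) => m' ->.
  by rewrite -natrD !epsF_nat exprD.
have hw : walsh p n (fun x => quadf p n l a x + trn p n (bb * x)) lam =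
     walsh p n (fun x => quadf p n l a x + trn p n (bb * x)) lam * epsF p (h beta).
  rewrite /walsh {1}(reindex_inj (addIr beta)) /= mulr_suml.
  by apply: eq_bigr => x _; exact: hE x.
have e1 : epsF p (h beta) = 1.
  by apply/esym/(mulfI hW); rewrite mulr1 -hw.
case: (hT beta) => m hm; rewrite hm epsF_nat in e1.
by rewrite /h in hm; rewrite hm; apply/eqP; rewrite -(dvdn_pcharf hchar); exact: eps_dvd _ hp _ e1.
Qed.

End Aux.


Theorem theorem5 (F : finFieldType) (p n : nat)
  (hp : prime p) (hodd : odd p) (hn : (0 < n)%N)
  (hchar : p \in [pchar F]) (hcard : #|F| = (p ^ n)%N)
  (l : nat -> nat) (a : nat -> nat -> F) (beta : F) (b : nat -> F) :
  beta != 0 ->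
  (forall k, (k < p)%N -> near_bent p n (quadf p n (l k) (a k))) ->
  (forall k, (k < p)%N -> forall z : F,
      linpol p (l k) (a k) z = 0 <-> exists c : 'I_p, z = (c%:R : F) * beta) ->
  (forall k, (k < p)%N ->
      quadf p n (l k) (a k) beta + trn p n (b k * beta)
      = quadf p n (l 0%N) (a 0%N) beta + (k%:R : F)) ->
  forall i j, (i < p)%N -> (j < p)%N -> i != j ->
    wsupp p n (fun x => quadf p n (l i) (a i) x + trn p n (b i * x))
    :&: wsupp p n (fun x => quadf p n (l j) (a j) x + trn p n (b j * x)) = set0.
Proof.
move=> hb _ hker hval i j hi hj hij.
apply/setP => lam; rewrite !inE; apply/negP => /andP [wi wj].
have L0 : forall k, (k < p)%N -> linpol p (l k) (a k) beta = 0.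
  move=> k hk; apply/(hker k hk); exists (Ordinal (prime_gt1 hp)).
  by rewrite /= mul1r.
have ei := walsh_shift _ _ _ hchar hcard hn _ _ _ _ _ (L0 i hi) wi.
have ej := walsh_shift _ _ _ hchar hcard hn _ _ _ _ _ (L0 j hj) wj.
rewrite hval // in ei; rewrite hval // in ej.
have : (i%:R : F) = j%:R.
  apply: (addrI (quadf p n (l 0%N) (a 0%N) beta)).
  apply: (addIr (- trn p n (lam * beta))); by rewrite ei ej.
move/(natr_inj_lt _ _ hchar _ _ hi hj) => e; by rewrite e eqxx in hij.
Qed.
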